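(* Let $X$ be a vector field on $\mathbb{S}^1$ with support function $\phi_X$, let $A\in\mathrm{O}_0(1,2)$ and $\sigma\in\mathbb{R}^{1,2}$. Then the support function of $A_*X+\Lambda(\sigma)$ satisfies $\mathrm{gr}(\phi_{A_*X+\Lambda(\sigma)})=\mathrm{Is}(A,\sigma)\,\mathrm{gr}(\phi_X)$.
   Context: $\mathbb{R}^{1,2}$ is $\mathbb{R}^3$ with $\langle x,y\rangle=-x_0y_0+x_1y_1+x_2y_2$; $\mathrm{O}_0(1,2)$ is the identity component of its linear isometry group, acting on the closed Klein disk $\overline{\mathbb{D}^2}$ (and on $\mathbb{S}^1$) by $A\cdot\eta=\Pi(A(1,\eta))$ where $\Pi(x_0,x_1,x_2)=(x_1/x_0,x_2/x_0)$. $A_*X$ is the pushforward of the vector field $X$ by the diffeomorphism $z\mapsto A\cdot z$ of $\mathbb{S}^1$. The Killing field $\Lambda(\sigma)$ (extended to $\mathbb{S}^1$) is $\eta\mapsto\mathrm{d}_{(1,\eta)}\Pi((1,\eta)\boxtimes\sigma)$, where $\langle x\boxtimes y,v\rangle=\det(x,y,v)$. The support function of a vector field $Y$ on $\mathbb{S}^1$ is $\phi_Y$ with $Y(z)=iz\phi_Y(z)$, and $\mathrm{gr}(\phi_Y)=\{(z,\phi_Y(z)):z\in\mathbb{S}^1\}\subset\overline{\mathbb{D}^2}\times\mathbb{R}$. The map $\mathrm{Is}(A,\sigma)$ acts on $\overline{\mathbb{D}^2}\times\mathbb{R}$ by $\mathrm{Is}(A,\sigma)(\eta,t)=\left(A\cdot\eta,\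 \frac{t}{-\langle A(1,\eta),(1,0,0)\rangle}+\langle(1,A\cdot\eta),\sigma\rangle\right)$. *)

(* Defs.v *)
From HB Require Import structures.
From mathcomp Require Import all_boot all_order all_algebra.
From mathcomp Require Import all_classical all_reals all_analysis.
Set Implicit Arguments. Unset Strict Implicit. Unset Printing Implicit Defensive.
Import Order.TTheory GRing.Theory Num.Theory.
Import numFieldNormedType.Exports.
Local Open Scope ring_scope.
Local Open Scope classical_set_scope.

Section Defs.
Variable R : realType.

Definition kcv3 (a b c : R) : 'cV[R]_3 := \col_(i < 3) nth 0 [:: a; b; c] i.
Definition kcv2 (a b : R) : 'cV[R]_2 := \col_(i < 2) nth 0 [:: a; b] i.
Definition kco n (x : 'cV[R]_n.+1) (k : nat) : R := x (inord k) ord0.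

Definition kmink (x y : 'cV[R]_3) : R :=
  - kco x 0 * kco y 0 + kco x 1 * kco y 1 + kco x 2 * kco y 2.

(* identity component O_0(1,2) = SO^+(1,2): linear isometries of kmink with
   det 1 preserving the time orientation *)
Definition O0_12 : set 'M[R]_3 :=
  [set A | (forall x y : 'cV[R]_3, kmink (A *m x) (A *m y) = kmink x y)
           /\ \det A = 1 /\ 0 < A ord0 ord0].

Definition Circ : set 'cV[R]_2 := [set z | kco z 0 ^+ 2 + kco z 1 ^+ 2 = 1].

Definition kPi (x : 'cV[R]_3) : 'cV[R]_2 := kcv2 (kco x 1 / kco x 0) (kco x 2 / kco x 0).
Definition klift1 (eta : 'cV[R]_2) : 'cV[R]_3 := kcv3 1 (kco eta 0) (kco eta 1).
Definition kact (A : 'M[R]_3) (eta : 'cV[R]_2) : 'cV[R]_2 := kPi (A *m klift1 eta).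

Definition kpush (A : 'M[R]_3) (X : 'cV[R]_2 -> 'cV[R]_2) (w : 'cV[R]_2) : 'cV[R]_2 :=
  let z := kact (invmx A) w in derive (kact A) z (X z).

Definition kdet3 (x y v : 'cV[R]_3) : R :=
  \det (\matrix_(i < 3, j < 3) kco (nth x [:: x; y; v] j) i).
(* x ⊠ y, the vector with  kmink (x ⊠ y) v = det(x, y, v)  for all v *)
Definition kboxt (x y : 'cV[R]_3) : 'cV[R]_3 :=
  \col_(k < 3) (kco (kcv3 (-1) 1 1) k * kdet3 x y (delta_mx k ord0)).

Definition kLam (sigma : 'cV[R]_3) (eta : 'cV[R]_2) : 'cV[R]_2 :=
  derive kPi (klift1 eta) (kboxt (klift1 eta) sigma).

(* multiplication by i:  z |-> i z *)
Definition krot (z : 'cV[R]_2) : 'cV[R]_2 := kcv2 (- kco z 1) (kco z 0).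
(* support function: the scalar phi_Y(z) with Y(z) = i z phi_Y(z)
   (for tangent Y and |z| = 1 it is the coordinate <Y(z), iz>) *)
Definition ksupp (Y : 'cV[R]_2 -> 'cV[R]_2) (z : 'cV[R]_2) : R :=
  kco (Y z) 0 * kco (krot z) 0 + kco (Y z) 1 * kco (krot z) 1.

Definition kgr (phi : 'cV[R]_2 -> R) : set ('cV[R]_2 * R) :=
  [set p | Circ p.1 /\ p.2 = phi p.1].

Definition kIs (A : 'M[R]_3) (sigma : 'cV[R]_3) (p : 'cV[R]_2 * R) : 'cV[R]_2 * R :=
  (kact A p.1,
   p.2 / (- kmink (A *m klift1 p.1) (kcv3 1 0 0)) + kmink (klift1 (kact A p.1)) sigma).

End Defs.
Arguments Circ {R}.
Arguments O0_12 {R}.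

(* Main.v *)
Require Import Defs.
From HB Require Import structures.
From mathcomp Require Import all_boot all_order all_algebra.
From mathcomp Require Import all_classical all_reals all_analysis.
From mathcomp Require Import ring lra.
Set Implicit Arguments. Unset Strict Implicit. Unset Printing Implicit Defensive.
Import Order.TTheory GRing.Theory Num.Theory.
Import numFieldNormedType.Exports.
Local Open Scope ring_scope.
Local Open Scope classical_set_scope.
Section S.
Variable R : realType.
Implicit Types (x y u : 'cV[R]_3) (z w : 'cV[R]_2) (A : 'M[R]_3).

Definition ent A (i j : nat) := A (inord i) (inord j).

Lemma cvE n (x : 'cV[R]_n.+1) : x = \col_(j < n.+1) kco x j.
Proof. by apply/matrixP => i j; rewrite !mxE /kco inord_val (ord1 j). Qed.

Lemma mxE3 A : A = \matrix_(i < 3, j < 3) ent A i j.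
Proof. by apply/matrixP => i j; rewrite !mxE /ent !inord_val. Qed.

Lemma kco_mul A x k : kco (A *m x) k = ent A k 0 * kco x 0 + ent A k 1 * kco x 1 + ent A k 2 * kco x 2.
Proof.
rewrite {1}(cvE x) {1}(mxE3 A) /kco mxE !big_ord_recl big_ord0 !mxE /= addr0 addrA.
by rewrite /ent inord_val.
Qed.

Lemma kco30 (a b c : R) : kco (kcv3 a b c) 0 = a. Proof. by rewrite /kco /kcv3 !mxE !inordK. Qed.
Lemma kco31 (a b c : R) : kco (kcv3 a b c) 1 = b. Proof. by rewrite /kco /kcv3 !mxE !inordK. Qed.
Lemma kco32 (a b c : R) : kco (kcv3 a b c) 2 = c. Proof. by rewrite /kco /kcv3 !mxE !inordK. Qed.
Lemma kco20 (a b : R) : kco (kcv2 a b) 0 = a. Proof. by rewrite /kco /kcv2 !mxE !inordK. Qed.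
Lemma kco21 (a b : R) : kco (kcv2 a b) 1 = b. Proof. by rewrite /kco /kcv2 !mxE !inordK. Qed.

Lemma kcoD n (x y : 'cV[R]_n.+1) k : kco (x + y) k = kco x k + kco y k.
Proof. by rewrite /kco mxE. Qed.
Lemma kcoZ n (c : R) (x : 'cV[R]_n.+1) k : kco (c *: x) k = c * kco x k.
Proof. by rewrite /kco mxE. Qed.
Lemma kcoN n (x : 'cV[R]_n.+1) k : kco (- x) k = - kco x k.
Proof. by rewrite /kco mxE. Qed.

Definition kcoE := (kco30, kco31, kco32, kco20, kco21, kcoD, kcoZ, kcoN).

Lemma cv2P z w : kco z 0 = kco w 0 -> kco z 1 = kco w 1 -> z = w.
Proof.
move=> h0 h1; rewrite (cvE z) (cvE w); apply/matrixP => i j; rewrite !mxE.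
by case: i => [[|[|]]] //= _; rewrite ?h0 ?h1.
Qed.
Lemma cv3P x y : kco x 0 = kco y 0 -> kco x 1 = kco y 1 -> kco x 2 = kco y 2 -> x = y.
Proof.
move=> h0 h1 h2; rewrite (cvE x) (cvE y); apply/matrixP => i j; rewrite !mxE.
by case: i => [[|[|[|]]]] //= _; rewrite ?h0 ?h1 ?h2.
Qed.

Lemma det3 A : \det A = ent A 0 0 * (ent A 1 1 * ent A 2 2 - ent A 1 2 * ent A 2 1)
  - ent A 0 1 * (ent A 1 0 * ent A 2 2 - ent A 1 2 * ent A 2 0)
  + ent A 0 2 * (ent A 1 0 * ent A 2 1 - ent A 1 1 * ent A 2 0).
Proof.
rewrite {1}(mxE3 A) (expand_det_row _ ord0) !big_ord_recl big_ord0 /cofactor.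
rewrite !(expand_det_row _ ord0) !big_ord_recl !big_ord0 /cofactor !det_mx11 !mxE /bump /=.
rewrite !expr0 !expr1 ?expr2 ?exprS ?expr0; ring.
Qed.


Lemma derive_kPi x u : kco x 0 != 0 ->
  derive (@kPi R) x u = (kco x 0 ^+ 2)^-1 *:
    kcv2 (kco u 1 * kco x 0 - kco x 1 * kco u 0) (kco u 2 * kco x 0 - kco x 2 * kco u 0).
Proof.
move=> x0n.
set V := kcv2 _ _.
rewrite /derive; apply: cvg_lim; first exact: norm_hausdorff.
have Hlin0 : (fun h : R => kco x 0 * (kco x 0 + h * kco u 0)) @ (nbhs (0:R)) --> kco x 0 ^+ 2.
  have -> : kco x 0 ^+ 2 = kco x 0 * (kco x 0 + 0 * kco u 0) by rewrite mul0r addr0 expr2.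
  apply: cvgM; first exact: cvg_cst.
  apply: cvgD; first exact: cvg_cst.
  apply: cvgM; [exact: cvg_id | exact: cvg_cst].
have Hlin : (fun h : R => kco x 0 * (kco x 0 + h * kco u 0)) @ 0^' --> kco x 0 ^+ 2.
  exact: cvg_within_filter Hlin0.
have HG : (fun h : R => (kco x 0 * (kco x 0 + h * kco u 0))^-1 *: V) @ 0^'
   --> (kco x 0 ^+ 2)^-1 *: V.
  apply: cvgZ; last exact: cvg_cst.
  by apply: cvgV; [rewrite expf_neq0 | exact: Hlin].
apply: (cvg_trans _ HG); apply: near_eq_cvg.
have Hne : \forall h \near 0^', kco x 0 * (kco x 0 + h * kco u 0) != 0.
  by apply: (cvgr_neq0 _ Hlin); rewrite expf_neq0.
near=> h.
have h0 : h != 0 by near: h; exact: nbhs_dnbhs_neq.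
have hd : kco x 0 * (kco x 0 + h * kco u 0) != 0 by near: h; exact: Hne.
have hd2 : kco x 0 + h * kco u 0 != 0 by move: hd; rewrite mulf_eq0 negb_or => /andP[].
rewrite /= /shift.
apply: cv2P; rewrite /kPi /V !kcoE; field.
  by rewrite addrC hd2 x0n h0.
by rewrite addrC hd2 x0n h0.
Unshelve. all: by end_near.
Qed.

Lemma cross_alg (a00 a01 a02 a10 a11 a12 a20 a21 a22 z0 z1 : R) :
 -a00*a00 + a10*a10 + a20*a20 = -1 ->
 -a00*a01 + a10*a11 + a20*a21 = 0 ->
 -a00*a02 + a10*a12 + a20*a22 = 0 ->
 -a01*a01 + a11*a11 + a21*a21 = 1 ->
 -a01*a02 + a11*a12 + a21*a22 = 0 ->
 -a02*a02 + a12*a12 + a22*a22 = 1 ->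
 a00 * (a11 * a22 - a12 * a21) - a01 * (a10 * a22 - a12 * a20) + a02 * (a10 * a21 - a11 * a20) = 1 ->
 z0^+2 + z1^+2 = 1 ->
 (a10 + a11*z0 + a12*z1) * (a21*(-z1) + a22*z0) - (a20 + a21*z0 + a22*z1) * (a11*(-z1) + a12*z0)
   = a00 + a01*z0 + a02*z1.
Proof.
move=> g00 g01 g02 g11 g12 g22 d c.
have e0 : (a11*a22 - a12*a21) - a00 =
  (a00 * (a11 * a22 - a12 * a21) - a01 * (a10 * a22 - a12 * a20) + a02 * (a10 * a21 - a11 * a20) - 1) * a00
  + ((-a00*a00 + a10*a10 + a20*a20) - -1) * (a11*a22 - a12*a21)
  + ((-a00*a01 + a10*a11 + a20*a21) - 0) * (-(a10*a22 - a12*a20))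
  + ((-a00*a02 + a10*a12 + a20*a22) - 0) * (a10*a21 - a11*a20) by ring.
have e1 : (-(a10*a22 - a12*a20)) + a01 =
  - (a00 * (a11 * a22 - a12 * a21) - a01 * (a10 * a22 - a12 * a20) + a02 * (a10 * a21 - a11 * a20) - 1) * a01
  - (((-a00*a01 + a10*a11 + a20*a21) - 0) * (a11*a22 - a12*a21)
  + ((-a01*a01 + a11*a11 + a21*a21) - 1) * (-(a10*a22 - a12*a20))
  + ((-a01*a02 + a11*a12 + a21*a22) - 0) * (a10*a21 - a11*a20)) by ring.
have e2 : (a10*a21 - a11*a20) + a02 =
  - (a00 * (a11 * a22 - a12 * a21) - a01 * (a10 * a22 - a12 * a20) + a02 * (a10 * a21 - a11 * a20) - 1) * a02
  - (((-a00*a02 + a10*a12 + a20*a22) - 0) * (a11*a22 - a12*a21)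
  + ((-a01*a02 + a11*a12 + a21*a22) - 0) * (-(a10*a22 - a12*a20))
  + ((-a02*a02 + a12*a12 + a22*a22) - 1) * (a10*a21 - a11*a20)) by ring.
rewrite g00 g01 g02 g11 g12 g22 d !subrr !(mul0r, add0r, addr0, oppr0, subr0) in e0 e1 e2.
apply/eqP; rewrite -subr_eq0; apply/eqP.
have -> : (a10 + a11*z0 + a12*z1) * (a21*(-z1) + a22*z0) - (a20 + a21*z0 + a22*z1) * (a11*(-z1) + a12*z0)
   - (a00 + a01*z0 + a02*z1) =
  - z0 * ((-(a10*a22 - a12*a20)) + a01) - z1 * ((a10*a21 - a11*a20) + a02)
  + (z0^+2 + z1^+2) * ((a11*a22 - a12*a21) - a00) + a00 * ((z0^+2 + z1^+2) - 1) by ring.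
by rewrite e0 e1 e2 c subrr !(mulr0, addr0, subr0).
Qed.

Lemma kco_delta (k i : nat) : (k < 3)%N -> (i < 3)%N ->
  kco (delta_mx (inord k) (ord0 : 'I_1) : 'cV[R]_3) i = (i == k)%:R.
Proof. by move=> hk hi; rewrite /kco mxE eqxx andbT -val_eqE /= !inordK. Qed.

Lemma kdet3E x y v : kdet3 x y v =
  kco x 0 * (kco y 1 * kco v 2 - kco v 1 * kco y 2)
  - kco y 0 * (kco x 1 * kco v 2 - kco v 1 * kco x 2)
  + kco v 0 * (kco x 1 * kco y 2 - kco y 1 * kco x 2).
Proof.
rewrite /kdet3 det3 /ent !mxE !inordK //=; ring.
Qed.

Lemma kboxtE x y : kboxt x y = kcv3 (-(kco x 1 * kco y 2 - kco x 2 * kco y 1))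
  (kco x 2 * kco y 0 - kco x 0 * kco y 2) (kco x 0 * kco y 1 - kco x 1 * kco y 0).
Proof.
apply: cv3P; rewrite /kboxt {1}/kco mxE inordK // !kdet3E !kco_delta // !kcoE /=; ring.
Qed.

Lemma klift1_lin (h : R) v z :
  klift1 (h *: v + z) = h *: kcv3 0 (kco v 0) (kco v 1) + klift1 z.
Proof. by apply: cv3P; rewrite /klift1 !kcoE; ring. Qed.

Lemma derive_kact A z v : derive (kact A) z v =
  derive (@kPi R) (A *m klift1 z) (A *m kcv3 0 (kco v 0) (kco v 1)).
Proof.
rewrite /derive; apply: (congr1 (fun f => lim (f @ (0:R)^'))); apply: funext => h /=.
by rewrite /shift /kact klift1_lin mulmxDr scalemxAr.
Qed.

Lemma kPi_lift z : kPi (klift1 z) = z.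
Proof. by apply: cv2P; rewrite /kPi /klift1 !kcoE divr1. Qed.

Lemma lift_kPi x : kco x 0 != 0 -> klift1 (kPi x) = (kco x 0)^-1 *: x.
Proof. by move=> h; apply: cv3P; rewrite /kPi /klift1 !kcoE; field. Qed.

Lemma kPiZ (c : R) x : c != 0 -> kPi (c *: x) = kPi x.
Proof.
by move=> h; apply: cv2P; rewrite /kPi !kcoE invfM mulrACA divff // mul1r.
Qed.

Lemma kminkZl (c : R) x y : kmink (c *: x) y = c * kmink x y.
Proof. by rewrite /kmink !kcoE; ring. Qed.

Lemma kco0 n k : kco (0 : 'cV[R]_n.+1) k = 0.
Proof. by rewrite /kco mxE. Qed.

Lemma cone0 x : kmink x x = 0 -> kco x 0 = 0 -> x = 0.
Proof.
rewrite /kmink => h h0; move: h; rewrite h0 mulr0 add0r => h.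
have s1 : 0 <= kco x 1 * kco x 1 by rewrite -expr2 sqr_ge0.
have s2 : 0 <= kco x 2 * kco x 2 by rewrite -expr2 sqr_ge0.
move/eqP: h; rewrite paddr_eq0 // !mulf_eq0 !orbb => /andP[/eqP h1 /eqP h2].
by apply: cv3P; rewrite kco0.
Qed.

Definition lor (M : 'M[R]_3) := forall x y, kmink (M *m x) (M *m y) = kmink x y.

Lemma lor_inv M : M \in unitmx -> lor M -> lor (invmx M).
Proof.
move=> hu hl x y; rewrite -hl !mulmxA mulmxV // !mul1mx //.
Qed.

Lemma kmink_lift z : Circ z -> kmink (klift1 z) (klift1 z) = 0.
Proof.
rewrite /Circ /= => hc; rewrite /kmink /klift1 !kcoE -!expr2; lra.
Qed.

Lemma act_pos M z : M \in unitmx -> lor M -> Circ z -> kco (M *m klift1 z) 0 != 0.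
Proof.
move=> hu hl hc; apply/eqP => h0.
have hp : kmink (M *m klift1 z) (M *m klift1 z) = 0 by rewrite hl kmink_lift.
have hp0 := cone0 hp h0.
have : klift1 z = invmx M *m (M *m klift1 z) by rewrite mulmxA mulVmx // mul1mx.
rewrite hp0 mulmx0 => /(congr1 (fun x => kco x 0)); rewrite /klift1 kco30 kco0 => /eqP.
by rewrite oner_eq0.
Qed.

Lemma act_circ M z : M \in unitmx -> lor M -> Circ z -> Circ (kact M z).
Proof.
move=> hu hl hc; have hp0 := act_pos hu hl hc.
have hp : kmink (M *m klift1 z) (M *m klift1 z) = 0 by rewrite hl kmink_lift.
move: hp0 hp; rewrite /Circ /= /kact /kPi !kcoE /kmink.
set p0 := kco _ 0; set p1 := kco _ 1; set p2 := kco _ 2 => hp0 hp.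
have e : p1 ^+ 2 + p2 ^+ 2 = p0 ^+ 2 by rewrite !expr2; lra.
by rewrite !expr_div_n -mulrDl e divff // expf_neq0.
Qed.

Lemma act_comp N M z : kco (M *m klift1 z) 0 != 0 ->
  kact N (kact M z) = kPi (N *m (M *m klift1 z)).
Proof.
by move=> h; rewrite {1}/kact /kact lift_kPi // -scalemxAr kPiZ // invr_neq0.
Qed.

Lemma cross_A A z : O0_12 A -> Circ z ->
  kco (A *m klift1 z) 1 * kco (A *m kcv3 0 (- kco z 1) (kco z 0)) 2
  - kco (A *m klift1 z) 2 * kco (A *m kcv3 0 (- kco z 1) (kco z 0)) 1
  = kco (A *m klift1 z) 0.
Proof.
move=> [hl [hd _]] hc.
have G00 := hl (kcv3 1 0 0) (kcv3 1 0 0).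
have G01 := hl (kcv3 1 0 0) (kcv3 0 1 0).
have G02 := hl (kcv3 1 0 0) (kcv3 0 0 1).
have G11 := hl (kcv3 0 1 0) (kcv3 0 1 0).
have G12 := hl (kcv3 0 1 0) (kcv3 0 0 1).
have G22 := hl (kcv3 0 0 1) (kcv3 0 0 1).
rewrite /kmink !kco_mul !kcoE !(mulr0, mulr1, addr0, add0r, oppr0) in G00 G01 G02 G11 G12 G22.
rewrite det3 in hd.
rewrite !kco_mul /klift1 !kcoE !(mulr0, mulr1, addr0, add0r).
exact: cross_alg.
Qed.

Lemma main_pt (X : 'cV[R]_2 -> 'cV[R]_2) A sigma w :
  (forall z, Circ z -> X z = ksupp X z *: krot z) -> O0_12 A -> Circ w ->
  let z := kact (invmx A) w in
  kpush A X w + kLam sigma w =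
    (ksupp X z / kco (A *m klift1 z) 0 + kmink (klift1 w) sigma) *: krot w.
Proof.
move=> hX hO hw z.
have [hl [hdet _]] := hO.
have hu : A \in unitmx by rewrite unitmxE hdet unitr1.
have hBu : invmx A \in unitmx by rewrite unitmx_inv.
have hBl : lor (invmx A) by apply: lor_inv.
have hr := act_pos hBu hBl hw.
have hz : Circ z by apply: act_circ.
set r := invmx A *m klift1 w in hr.
have hAz : A *m klift1 z = (kco r 0)^-1 *: klift1 w.
  by rewrite /z /kact lift_kPi // -scalemxAr mulmxA mulmxV // mul1mx.
have hc : (kco r 0)^-1 != 0 by rewrite invr_neq0.
set c := (kco r 0)^-1 in hAz hc.
have hcr := cross_A hO hz.
set phi := ksupp X z.
have hq : kcv3 0 (kco (phi *: krot z) 0) (kco (phi *: krot z) 1) = phi *: kcv3 0 (- kco z 1) (kco z 0).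
  by apply: cv3P; rewrite /krot !kcoE; ring.
set s := A *m kcv3 0 (- kco z 1) (kco z 0) in hcr.
have F2 : kmink (A *m klift1 z) s = 0.
  rewrite hl /kmink /klift1 !kcoE; ring.
rewrite /kpush -/z (hX z hz) derive_kact hq -scalemxAr -/s.
rewrite hAz in hcr F2 *.
rewrite derive_kPi; last by rewrite kcoZ /klift1 kco30 mulr1.
rewrite /kLam kboxtE derive_kPi; last by rewrite /klift1 kco30 oner_neq0.
move: hw hcr F2; rewrite /Circ /= /krot /kmink /klift1 !kcoE.
set w0 := kco w 0; set w1 := kco w 1; set s0 := kco s 0; set s1 := kco s 1; set s2 := kco s 2.
set g0 := kco sigma 0; set g1 := kco sigma 1; set g2 := kco sigma 2.
move=> hC hcr F2.
have hE : w0 * s2 - w1 * s1 - 1 = 0.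
  have h' : c * (w0 * s2 - w1 * s1 - 1) = 0.
    by rewrite -(subrr (c*1)) -{1}hcr; ring.
  by move/eqP: h'; rewrite mulf_eq0 (negbTE hc) /= => /eqP.
have e1 : s0 = w0 * s1 + w1 * s2.
  have h' : c * (w0 * s1 + w1 * s2 - s0) = 0 by rewrite -F2; ring.
  move/eqP: h'; rewrite mulf_eq0 (negbTE hc) /= subr_eq0 => /eqP ->. done.
apply: cv2P; rewrite !kcoE; apply/eqP; rewrite -subr_eq0; apply/eqP.
  transitivity (phi / c * (s1 * (1 - (w0^+2 + w1^+2)) - w1 * (w0 * s2 - w1 * s1 - 1))
                 + g2 * ((w0^+2 + w1^+2) - 1)).
    by rewrite e1; field.
  by rewrite hC hE subrr; ring.
transitivity (phi / c * (s2 * (1 - (w0^+2 + w1^+2)) + w0 * (w0 * s2 - w1 * s1 - 1))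
               + g1 * (1 - (w0^+2 + w1^+2))).
  by rewrite e1; field.
by rewrite hC hE subrr; ring.
Qed.
End S.

Lemma kmink_e0 (R : realType) (x : 'cV[R]_3) : - kmink x (kcv3 1 0 0) = kco x 0.
Proof. by rewrite /kmink !kcoE; ring. Qed.

Unset Implicit Arguments.
Set Strict Implicit.

Theorem lemma2p12 (R : realType) (X : 'cV[R]_2 -> 'cV[R]_2)
    (A : 'M[R]_3) (sigma : 'cV[R]_3) :
  (forall z, Circ z -> X z = ksupp X z *: krot z) ->
  O0_12 A ->
  let Y := fun w => kpush A X w + kLam sigma w in
  (forall z, Circ z -> Y z = ksupp Y z *: krot z) /\
  kgr (ksupp Y) = kIs A sigma @` kgr (ksupp X).
Proof.
move=> hX hO Y.
have [hl [hdet _]] := hO.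
have hu : A \in unitmx by rewrite unitmxE hdet unitr1.
have hBu : invmx A \in unitmx by rewrite unitmx_inv.
have hBl : lor (invmx A) by apply: lor_inv.
have HY w : Circ w -> Y w = (ksupp X (kact (invmx A) w) / kco (A *m klift1 (kact (invmx A) w)) 0
      + kmink (klift1 w) sigma) *: krot w.
  by move=> hw; exact: main_pt.
have HS w : Circ w -> ksupp Y w = ksupp X (kact (invmx A) w) / kco (A *m klift1 (kact (invmx A) w)) 0
      + kmink (klift1 w) sigma.
  move=> hw; have := hw; rewrite /Circ /= => hC.
  rewrite [LHS]/ksupp (HY w hw) /krot !kcoE.
  rewrite -[RHS]mulr1 -hC; ring.
have hAB w : Circ w -> kact A (kact (invmx A) w) = w.
  move=> hw; rewrite act_comp; last exact: act_pos.
  by rewrite mulmxA mulmxV // mul1mx kPi_lift.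
have hBA z : Circ z -> kact (invmx A) (kact A z) = z.
  move=> hz; rewrite act_comp; last exact: act_pos.
  by rewrite mulmxA mulVmx // mul1mx kPi_lift.
split.
  by move=> w hw; rewrite (HS w hw); exact: HY.
apply/seteqP; split.
  move=> [w t] [/= hw ->].
  exists (kact (invmx A) w, ksupp X (kact (invmx A) w)).
    by split => //=; apply: act_circ.
  rewrite /kIs /= kmink_e0 hAB // HS //.
move=> _ [[z t] [/= hz ->] <-].
rewrite /kIs /=; split => /=; first exact: act_circ.
by rewrite HS ?hBA ?kmink_e0 //; apply: act_circ.
Qed.
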